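(* For every set $M$ of $m$ items, every integer $n\ge 1$, and every normalized monotone valuation $v:2^M\to\mathbb{R}_{\ge 0}$, we have $\mathrm{RMMS}(M,v,n)\ \ge\ \mathrm{MXS}(M,v,n)$.
   Context: Items: a finite set $M=\{e_1,\dots,e_m\}$; there are $n$ agents. A valuation is a function $v:2^M\to\mathbb{R}$ that is normalized ($v(\emptyset)=0$) and monotone ($v(S)\le v(T)$ whenever $S\subseteq T\subseteq M$). For $S\subseteq M$ and $e\in S$, $S-e$ denotes $S\setminus\{e\}$. An allocation is a partition $A_1,\dots,A_n$ of $M$ (parts may be empty), with $A_i$ given to agent $a_i$. Residual maximin share: $\mathrm{RMMS}(M,v,n)$ is the largest real $t$ with the following property: for every $0\le k<n$ and every $k$ pairwise disjoint bundles $B_1,\dots,B_k\subseteq M$ with $v(B_j)<t$ for all $j$, the set $M\setminus(B_1\cup\dots\cup B_k)$ can be partitioned into $n-k$ bundles each of value (under $v$) at least $t$. MXS: for an agent $a_i$ with valuation $v_i$, $\mathrm{MXS}(M,v_i,n)$ is the minimum of $v_i(S)$ over all bundles $S\subseteq M$ for which there exists an allocation $A_1,\dots,A_n$ with $A_i=S$ such that for every $j$ and every $e\in A_j$, $v_i(S)\ge v_i(A_j-e)$ (i.e. $a_i$ has no EFX envy towards any agent). *)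

(* Defs.v *)
From HB Require Import structures.
From mathcomp Require Import all_boot all_order all_algebra.
From mathcomp Require Import classical_sets reals.
Set Implicit Arguments. Unset Strict Implicit. Unset Printing Implicit Defensive.
Import Order.TTheory GRing.Theory Num.Theory.
Local Open Scope ring_scope.

(* Items: the finite type T; the set of all items is M = [set: T]. *)
Section Defs.
Variables (R : realType) (T : finType).

Definition normalized (v : {set T} -> R) : Prop := v (@finset.set0 T) = 0.
Definition monotone_val (v : {set T} -> R) : Prop :=
  forall S U : {set T}, S \subset U -> v S <= v U.
Definition nonneg_val (v : {set T} -> R) : Prop := forall S, 0 <= v S.

Definition is_partition (X : {set T}) (p : nat) (A : 'I_p -> {set T}) : Prop :=
  (forall j1 j2 : 'I_p, j1 != j2 -> [disjoint A j1 & A j2]) /\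
  \bigcup_(j < p) A j = X.

Definition rmms_prop (v : {set T} -> R) (n : nat) (t : R) : Prop :=
  forall (k : nat), (k < n)%N ->
  forall B : 'I_k -> {set T},
    (forall j1 j2 : 'I_k, j1 != j2 -> [disjoint B j1 & B j2]) ->
    (forall j, v (B j) < t) ->
    exists A : 'I_(n - k) -> {set T},
      is_partition (~: \bigcup_(j < k) B j) A /\ (forall j, t <= v (A j)).

Definition RMMS (v : {set T} -> R) (n : nat) : R :=
  sup [set t | rmms_prop v n t].

(* S is a bundle of agent i in some allocation where i has no EFX envy. *)
Definition mxs_feasible (v : {set T} -> R) (n : nat) (i : 'I_n) (S : {set T})
  : Prop :=
  exists A : 'I_n -> {set T},
    is_partition [set: T] A /\ A i = S /\
    (forall (j : 'I_n) (e : T), e \in A j -> v (A j :\ e) <= v S).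

Definition MXS (v : {set T} -> R) (n : nat) (i : 'I_n) : R :=
  inf (classical_sets.image [set S | mxs_feasible v i S] v).

End Defs.

(* Main.v *)
Require Import Defs.
From HB Require Import structures.
From mathcomp Require Import all_boot all_order all_algebra.
From mathcomp Require Import classical_sets reals.
From Stdlib Require Import Classical.
From mathcomp Require Import zify.
Set Implicit Arguments. Unset Strict Implicit.
Import Order.TTheory GRing.Theory Num.Theory.
Local Open Scope ring_scope.

Section Aux.
Variables (R : realType) (T : finType) (v : {set T} -> R).
Hypothesis vmono : monotone_val v.

Lemma part_iff (X : {set T}) (p : nat) (A : 'I_p -> {set T}) :
  (forall x, (x \in X -> exists j, x \in A j) /\ (forall j, x \in A j -> x \in X) /\
     (forall j1 j2, x \in A j1 -> x \in A j2 -> j1 = j2)) -> is_partition X A.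
Proof.
move=> H; split.
  move=> j1 j2 hne; apply/pred0P => x /=; apply/negbTE/negP => /andP[h1 h2].
  have [_ [_ h]] := H x; by move: hne; rewrite (h _ _ h1 h2) eqxx.
apply/setP => x; apply/bigcupP/idP.
  by case=> j _ hj; have [_ [h _]] := H x; exact: h j hj.
by move=> hx; have [h _] := H x; have [j hj] := h hx; exists j.
Qed.

Lemma part_in (X : {set T}) (p : nat) (A : 'I_p -> {set T}) x j :
  is_partition X A -> x \in A j -> x \in X.
Proof. by case=> _ <- h; apply/bigcupP; exists j. Qed.

Lemma part_cover (X : {set T}) (p : nat) (A : 'I_p -> {set T}) x :
  is_partition X A -> x \in X -> exists j, x \in A j.
Proof. by case=> _ <- /bigcupP[j _ h]; exists j. Qed.

Lemma part_uniq (X : {set T}) (p : nat) (A : 'I_p -> {set T}) x j1 j2 :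
  is_partition X A -> x \in A j1 -> x \in A j2 -> j1 = j2.
Proof.
case=> hd _ h1 h2; apply/eqP; apply/negP => /negP hne.
have := hd _ _ hne => /pred0P/(_ x) /=; by rewrite h1 h2.
Qed.

Definition rk (x : R) : nat := #|[set Z : {set T} | v Z < x]|.

Lemma rk_lt Z1 Z2 : v Z1 < v Z2 -> (rk (v Z1) < rk (v Z2))%N.
Proof.
move=> h; apply: proper_card; apply/properP; split.
  by apply/fintype.subsetP => Z; rewrite !inE => hz; exact: lt_trans hz h.
by exists Z1; rewrite !inE ?ltxx.
Qed.

Lemma rk_le Z1 Z2 : v Z1 <= v Z2 -> (rk (v Z1) <= rk (v Z2))%N.
Proof.
move=> h; apply: subset_leq_card; apply/fintype.subsetP => Z; rewrite !inE => hz.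
exact: lt_le_trans hz h.
Qed.

Lemma rk_le_inv Z1 Z2 : (rk (v Z1) <= rk (v Z2))%N -> v Z1 <= v Z2.
Proof. by move=> h; rewrite leNgt; apply/negP => /rk_lt; rewrite ltnNge h. Qed.

Definition key (Z : {set T}) : nat := (rk (v Z) * (#|T|.+1) + #|Z|)%N.
Definition KK : nat := (#|{set T}| * (#|T|.+1) + #|T|)%N.

Lemma key_le Z : (key Z <= KK)%N.
Proof.
rewrite /key /KK; apply: leq_add; last exact: max_card.
by apply: leq_mul => //; exact: max_card.
Qed.

Definition g (Z : {set T}) : nat := (2 ^ (KK - key Z))%N.
Definition Psi (p : nat) (A : 'I_p -> {set T}) : nat := (\sum_(j < p) g (A j))%N.

Definition EFX (p : nat) (A : 'I_p -> {set T}) : Prop :=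
  forall s y e, e \in A y -> v (A y :\ e) <= v (A s).

Lemma g_step (S Y : {set T}) e : e \notin S -> v (S) < v Y ->
  (g (e |: S) + g Y <= g S)%N.
Proof.
move=> heS hlt.
have k1 : (key S < key (e |: S))%N.
  rewrite /key cardsU1 heS add1n addnS ltnS leq_add2r leq_mul2r; apply/orP; right.
  by apply: rk_le; apply: vmono; exact: finset.subsetUr.
have k2 : (key S < key Y)%N.
  rewrite /key; have := rk_lt hlt => h.
  apply: (@leq_trans ((rk (v S)).+1 * #|T|.+1)).
    have hc : (#|S| <= #|T|)%N by exact: max_card.
    rewrite mulSn; lia.
  by apply: leq_trans (leq_addr _ _); rewrite leq_mul2r h orbT.
have hK1 := key_le (e |: S); have hK2 := key_le Y.
have hk : (KK - key S = (KK - key S).-1.+1)%N by rewrite prednK // subn_gt0; apply: leq_trans k1 hK1.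
rewrite /g hk expnS mul2n -addnn leq_add // leq_pexp2l //.
  by rewrite -ltnS -hk; apply: ltn_sub2l => //; exact: leq_trans k1 hK1.
by rewrite -ltnS -hk; apply: ltn_sub2l => //; exact: leq_trans k2 hK2.
Qed.

Section Move.
Variables (X : {set T}) (p : nat) (A : 'I_p -> {set T}) (s y : 'I_p) (e : T).
Hypotheses (hA : is_partition X A) (hsy : s != y) (he : e \in A y).

Definition A' : 'I_p -> {set T} :=
  fun j => if j == s then e |: A s else if j == y then A y :\ e else A j.

Lemma memA' x j : (x \in A' j) = ((x == e) && (j == s)) || ((x != e) && (x \in A j)).
Proof.
rewrite /A'; case: (eqVneq j s) => [->|hjs] /=.
  by rewrite in_setU1 andbT; case: (eqVneq x e).
rewrite andbF /=; case: (eqVneq j y) => [->|hjy]; first by rewrite in_setD1.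
case: (eqVneq x e) => [->|] //=; apply/negP => h.
by move: hjy; rewrite (part_uniq hA h he) eqxx.
Qed.

Lemma A'_part : is_partition X A'.
Proof.
apply: part_iff => x; split; [|split].
- move=> hx; case: (eqVneq x e) => [->|hxe].
    by exists s; rewrite memA' !eqxx.
  by have [j hj] := part_cover hA hx; exists j; rewrite memA' hxe hj orbT.
- move=> j; rewrite memA' => /orP[/andP[/eqP -> _]|/andP[_ h]].
    exact: part_in hA he.
  exact: part_in hA h.
- move=> j1 j2; rewrite !memA'.
  case: (eqVneq x e) => [_|_] /=; first by rewrite !orbF => /eqP -> /eqP ->.
  exact: part_uniq hA.
Qed.

Lemma A'_Psi : v (A s) < v (A y :\ e) -> (Psi A' < Psi A)%N.
Proof.
move=> hlt.
have heS : e \notin A s.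
  by apply/negP => h; move: hsy; rewrite (part_uniq hA h he) eqxx.
have hys : y != s by rewrite eq_sym.
rewrite /Psi (bigD1 s) //= (bigD1 y) //= [X in (_ < X)%N](bigD1 s) //= [in X in (_ < X)%N](bigD1 y) //=.
have -> : (\sum_(i < p | (i != s) && (i != y)) g (A' i) =
          \sum_(i < p | (i != s) && (i != y)) g (A i))%N.
  by apply: eq_bigr => j /andP[h1 h2]; rewrite /A' (negbTE h1) (negbTE h2).
rewrite /A' eqxx (negbTE hys) eqxx.
have h := g_step heS hlt.
have hp : (0 < g (A y))%N by rewrite /g expn_gt0.
rewrite !addnA ltn_add2r; lia.
Qed.
End Move.

Lemma efx_aux (X : {set T}) (p : nat) N : forall A : 'I_p -> {set T},
  (Psi A <= N)%N -> is_partition X A ->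
  exists B : 'I_p -> {set T}, is_partition X B /\ EFX B.
Proof.
elim: N => [|N IH] A hN hA; (case: (classic (EFX A)) => [h|h]; first by exists A);
  (have [s hs] := not_all_ex_not _ _ h; have [y hy] := not_all_ex_not _ _ hs;
   have [e he] := not_all_ex_not _ _ hy;
   have [he1 he2] := imply_to_and _ _ he;
   have hlt : v (A s) < v (A y :\ e) by rewrite ltNge; apply/negP);
  (have hsy : s != y by
    apply/negP => /eqP hsy; move: hlt; rewrite hsy ltNge vmono // finset.subD1set);
  have := A'_Psi hA hsy he1 hlt.
- lia.
- move=> hP; apply: (IH (A' A s y e)); first lia.
  exact: A'_part.
Qed.

Lemma efx_exists (X : {set T}) (p : nat) : (0 < p)%N ->
  exists B : 'I_p -> {set T}, is_partition X B /\ EFX B.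
Proof.
move=> hp; pose j0 : 'I_p := Ordinal hp.
pose A0 := fun j : 'I_p => if j == j0 then X else (@finset.set0 T).
apply: (@efx_aux X p (Psi A0) A0) => //.
apply: part_iff => x; split; [|split].
- by move=> hx; exists j0; rewrite /A0 eqxx.
- by move=> j; rewrite /A0; case: (j == j0); rewrite ?inE.
- move=> j1 j2; rewrite /A0.
  case: (eqVneq j1 j0) => [->|_]; case: (eqVneq j2 j0) => [->|_] //; by rewrite inE.
Qed.
End Aux.

Theorem mainTheorem1 (R : realType) (T : finType) (n : nat) (hn : (1 <= n)%N)
  (v : {set T} -> R) (i : 'I_n) :
  normalized v -> monotone_val v -> nonneg_val v ->
  MXS v i <= RMMS v n.
Proof.
move=> _ hmono hnn.
set t := MXS v i.
have hub : has_ubound [set t | rmms_prop v n t].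
  exists (v [set: T]) => x hx.
  have [A [_ hge]] := hx 0%N hn (fun _ => finset.set0) (fun j => match j with Ordinal _ h => ltac:(done) end)
    (fun j => match j with Ordinal _ h => ltac:(done) end).
  have hn0 : (0 < n - 0)%N by rewrite subn0.
  apply: le_trans (hge (Ordinal hn0)) _; apply: hmono; exact: finset.subsetT.
apply: (ub_le_sup hub).
move=> k hk B hBd hBlt.
have hp : (0 < n - k)%N by rewrite subn_gt0.
have [A [hA hefx]] := efx_exists hmono (~: \bigcup_(j < k) B j) hp.
exists A; split => // s; rewrite leNgt; apply/negP => hs.
have hkn : (k + (n - k) = n)%N := subnKC (ltnW hk).
pose G' (u : 'I_k + 'I_(n - k)) := match u with inl a => B a | inr b => A b end.
pose emb (u : 'I_k + 'I_(n - k)) : 'I_n := cast_ord hkn (unsplit u).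
pose G (j : 'I_n) := G' (split (cast_ord (esym hkn) j)).
have Gemb u : G (emb u) = G' u by rewrite /G /emb cast_ordK unsplitK.
have embS j : exists u, j = emb u.
  by exists (split (cast_ord (esym hkn) j)); rewrite /emb splitK cast_ordKV.
have embI u1 u2 : emb u1 = emb u2 -> u1 = u2.
  by move=> /(congr1 (cast_ord (esym hkn))); rewrite !cast_ordK => /(congr1 split); rewrite !unsplitK.
have hG : is_partition [set: T] G.
  apply: part_iff => x; split; [|split].
  - move=> _; case: (boolP (x \in \bigcup_(j < k) B j)) => [/bigcupP[a _ ha]|hx].
      by exists (emb (inl a)); rewrite Gemb.
    have [b hb] : exists b, x \in A b by apply: part_cover hA _; rewrite inE.
    by exists (emb (inr b)); rewrite Gemb.
  - by move=> *; rewrite inE.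
  - move=> j1 j2; have [u1 ->] := embS j1; have [u2 ->] := embS j2; rewrite !Gemb.
    case: u1 => [a1|b1]; case: u2 => [a2|b2] /= h1 h2.
    + case: (eqVneq a1 a2) => [->//|hne].
      by have := hBd _ _ hne => /pred0P/(_ x) /=; rewrite h1 h2.
    + have := part_in hA h2; rewrite inE => /negP[]; apply/bigcupP; by exists a1.
    + have := part_in hA h1; rewrite inE => /negP[]; apply/bigcupP; by exists a2.
    + by rewrite (part_uniq hA h1 h2).
pose js := emb (inr s).
have Pjs : v (G js) < t by rewrite Gemb.
case: (@arg_maxnP _ js (fun j => v (G j) < t) (fun j => rk v (v (G j))) Pjs) => w Pw Hmax.
pose sw (j : 'I_n) := if j == i then w else if j == w then i else j.
have swK j : sw (sw j) = j.
  rewrite /sw; case: (eqVneq j i) => [->|hji] /=.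
    by rewrite ?eqxx; case: (eqVneq w i) => [->|hwi] /=.
  case: (eqVneq j w) => [->|hjw] /=; first by rewrite eqxx.
  by rewrite (negbTE hji) (negbTE hjw).
pose F j := G (sw j).
have hF : is_partition [set: T] F.
  apply: part_iff => x; split; [|split].
  - move=> hx; have [j0 hj] := part_cover hG hx; exists (sw j0); by rewrite /F swK.
  - by move=> *; rewrite inE.
  - move=> j1 j2 h1 h2; have := part_uniq hG h1 h2 => /(congr1 sw); by rewrite !swK.
have hFi : F i = G w by rewrite /F /sw eqxx.
have hfeas : mxs_feasible v i (G w).
  exists F; split => //; split; first exact: hFi.
  move=> j e; rewrite /F.
  move: (sw j) => j' he.
  case: (boolP (v (G j') < t)) => hj'.
    apply: le_trans (hmono _ _ (finset.subD1set _ _)) _.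
    by apply: rk_le_inv; exact: Hmax.
  have [[a|b] hu] := embS j'; move: he hj'; rewrite hu Gemb /=.
    by rewrite hBlt.
  move=> he _; apply: le_trans (hefx s b e he) _.
  have := Hmax js Pjs; rewrite Gemb /= => h; exact: rk_le_inv h.
have hlb : has_lbound (classical_sets.image [set S | mxs_feasible v i S] v).
  by exists 0 => y [S _ <-].
have : t <= v (G w) by apply: (ge_inf hlb); exists (G w).
by rewrite leNgt Pw.
Qed.
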